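(* Let $\alpha>2$, $\lambda_e>0$, $0<\epsilon<1$, and $K_1=\pi\lambda_e\Gamma(1+\frac{2}{\alpha})\Gamma(1-\frac{2}{\alpha})$. Consider a network of $N_L$ legitimate nodes including a source $S$ and a destination $D$, in which each link $l$ between two nodes has a length $|D_l|>0$, and let $L_{SD}$ be the set of all paths (sequences of links through distinct nodes) from $S$ to $D$; for $L\in L_{SD}$ let $|L|$ be its number of hops. Put $T=\frac{\ln\frac{1}{1-\epsilon}}{K_1}$ and, for a path $L$ with $\sum_{l\in L}|D_l|^2<T$, $$M_t(L)=\frac{\alpha}{2|L|}\log_2\left(\frac{\ln\frac{1}{1-\epsilon}}{K_1\sum_{l\in L}|D_l|^2}\right),$$ with the convention $M_t(\varnothing)=-\infty$. Consider problem $\mathbf{P1}'$: maximize $M_t(L)$ over $L\in L_{SD}$ subject to $$\lambda_e<\frac{\ln\frac{1}{1-\epsilon}}{\pi\Gamma(1+\frac{2}{\alpha})\Gamma(1-\frac{2}{\alpha})\sum_{l\in L}|D_l|^2}$$ (equivalently $\sum_{l\in L}|D_l|^2<T$). For each $v\in\{1,\dots,N_L-1\}$ let $\tilde L_v$ be a minimizer of $\sum_{l\in L}|D_l|^2$ over all $L\in L_{SD}$ with $|L|\le v$ if this minimum exists and is strictly less than $T$, and $\tilde L_v=\varnothing$ otherwise. Then $\mathbf{P1}'$ is equivalent to problem $\mathbf{P2}$: $M_t(L^* )=\max_{1\le v\le N_L-1}M_t(\tilde L_v)$; that is, the optimal value of $\mathbf{P1}'$ equals $\max_{1\le v\le N_L-1}M_t(\tilde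 L_v)$ and a maximizing $\tilde L_v$ is an optimal path $L^*$ of $\mathbf{P1}'$.
   Context: Background: $M_t(L)$ is the secrecy rate $R_s^*/|L|$ of path $L$, where $R_s^*=\frac{\alpha}{2}\log_2\big(\ln\frac{1}{1-\epsilon}/(K_1\sum_{l\in L}|D_l|^2)\big)$ is the largest confidential-information rate for which the end-to-end secrecy outage probability $1-\exp[-K_1 2^{2R_s/\alpha}\sum_{l\in L}|D_l|^2]$ does not exceed $\epsilon$; the constraint in $\mathbf{P1}'$ is the requirement $R_s^*>0$. Here $\lambda_e$ is the density of the Poisson point process of eavesdroppers and $\alpha$ the path-loss exponent. *)

(* Defs.v *)
From HB Require Import structures.
From mathcomp Require Import all_boot all_order all_algebra.
From mathcomp Require Import all_classical all_reals all_analysis.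
Set Implicit Arguments. Unset Strict Implicit. Unset Printing Implicit Defensive.
Import Order.TTheory GRing.Theory Num.Theory.
Local Open Scope ring_scope.
Local Open Scope classical_set_scope.

Definition Gamma (R : realType) (s : R) : R :=
  fine (\int[@lebesgue_measure R]_(x in `]0%R, +oo[%classic) (x `^ (s - 1) * expR (- x))%:E)%E.

Definition log2 (R : realType) (x : R) : R := ln x / ln 2.

Definition K1 (R : realType) (alpha lambda_e : R) : R :=
  pi * lambda_e * Gamma (1 + 2 / alpha) * Gamma (1 - 2 / alpha).

(* A path is given by its node sequence s = [:: S; ...; D]; its links are
   the consecutive pairs. *)
Definition is_SD_path (V : finType) (e : rel V) (S D : V) (s : seq V) : bool :=
  [&& head D s == S, last S s == D, path e S (behead s), uniq s & 0 < size s]%N.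

Definition hops (V : finType) (s : seq V) : nat := (size s).-1.

Definition sqlen (R : realType) (V : finType) (d : V -> V -> R) (s : seq V) : R :=
  \sum_(p <- zip s (behead s)) (d p.1 p.2) ^+ 2.

Definition thrT (R : realType) (alpha lambda_e eps : R) : R :=
  ln ((1 - eps)^-1) / K1 alpha lambda_e.

Definition Mt (R : realType) (V : finType) (d : V -> V -> R)
    (alpha lambda_e eps : R) (L : option (seq V)) : \bar R :=
  match L with
  | None => -oo%E
  | Some s => (alpha / (2 * (hops s)%:R) *
      log2 (ln ((1 - eps)^-1) / (K1 alpha lambda_e * sqlen d s)))%:E
  end.

(* Main.v *)
Require Import Defs.
From HB Require Import structures.
From mathcomp Require Import all_boot all_order all_algebra.
From mathcomp Require Import all_classical all_reals all_analysis.
From mathcomp Require Import lra zify.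
From Stdlib Require Import Lia.
Import Order.TTheory GRing.Theory Num.Theory.
Local Open Scope ring_scope.
Local Open Scope classical_set_scope.

Lemma sd_shape (V : finType) (e : rel V) (S D : V) (s : seq V) :
  S != D -> is_SD_path e S D s ->
  exists x rest, s = S :: x :: rest /\ e S x.
Proof.
move=> SD; case: s => [|a [|b r]]; rewrite /is_SD_path /=.
- by move=> /and3P[].
- move=> /and3P[/eqP -> /eqP aD _]; by rewrite aD eqxx in SD.
- move=> /and5P[/eqP -> _ /andP[eb _] _ _]; by exists b, r.
Qed.
Arguments sd_shape {V e S D s}.

Lemma sd_hops (V : finType) (e : rel V) (S D : V) (s : seq V) :
  S != D -> is_SD_path e S D s -> (1 <= hops s <= #|V| - 1)%N.
Proof.
move=> SD ps; have [x [r [se _]]] := sd_shape SD ps.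
move: ps => /and5P[_ _ _ u _]; rewrite se in u *.
have mc : (#|S :: x :: r| <= #|V|)%N by apply: max_card.
move: mc; rewrite (card_uniqP u) /hops /=. lia.
Qed.
Arguments sd_hops {V e S D s}.

Lemma sd_sqlen_pos (R : realType) (V : finType) (e : rel V) (d : V -> V -> R)
  (S D : V) (s : seq V) :
  (forall x y, e x y -> 0 < d x y) ->
  S != D -> is_SD_path e S D s -> 0 < sqlen d s.
Proof.
move=> dpos SD ps; have [x [r [-> ex]]] := sd_shape SD ps.
rewrite /sqlen /= big_cons /=.
have h1 : 0 < d S x ^+ 2 by rewrite exprn_gt0 // dpos.
have h2 : 0 <= \sum_(p <- zip (x :: r) r) d p.1 p.2 ^+ 2.
  by apply: sumr_ge0 => p _; apply: sqr_ge0.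
lra.
Qed.
Arguments sd_sqlen_pos {R V e d S D s}.

Lemma key (R : realType) (c K q1 q2 a : R) (h1 h2 : nat) :
  0 < c -> 0 < K -> 0 < a -> 0 < q1 -> q1 <= q2 -> q2 < c / K ->
  (0 < h1)%N -> (h1 <= h2)%N ->
  a / (2 * h2%:R) * log2 (c / (K * q2)) <= a / (2 * h1%:R) * log2 (c / (K * q1)).
Proof.
move=> c0 K0 a0 q10 q12 q2c h10 h12.
have q20 : 0 < q2 by apply: lt_le_trans q12.
have l20 : 0 < ln (2 : R) by apply: ln_gt0; lra.
have h20 : (0 < h2)%N by apply: leq_trans h12.
have Kq2 : K * q2 < c by move: q2c; rewrite ltr_pdivlMr // mulrC.
have g1 : 1 < c / (K * q2) by rewrite ltr_pdivlMr ?mulr_gt0 // mul1r.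
apply: ler_pM.
- by apply: divr_ge0; [lra| rewrite mulr_ge0 // ler0n].
- rewrite /log2 divr_ge0 //; [by apply/ltW/ln_gt0 | lra].
- rewrite ler_pM2l // lef_pV2 ?posrE ?mulr_gt0 ?ltr0n //.
  by rewrite ler_pM2l ?ler_nat.
- rewrite /log2 ler_pM2r ?invr_gt0 // ler_ln ?posrE ?divr_gt0 ?mulr_gt0 //.
  rewrite ler_pM2l // lef_pV2 ?posrE ?mulr_gt0 //.
  by rewrite ler_pM2l.
Qed.

Lemma bigmax_ge (R : realType) (F : nat -> \bar R) m n i :
  (m <= i < n)%N -> (F i <= \big[Order.max/-oo]_(m <= j < n) F j)%E.
Proof.
elim: n => [|n IH]; first by rewrite ltn0 andbF.
move=> /andP[mi]; rewrite ltnS leq_eqVlt => /orP[/eqP|lt].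
  move=> ein; subst i; rewrite big_nat_recr //=.
  by rewrite le_max lexx orbT.
rewrite big_nat_recr /=; last by apply: leq_trans mi (ltnW lt).
by rewrite le_max IH ?mi.
Qed.

Theorem theorem2 (R : realType) (alpha lambda_e eps : R)
  (V : finType) (e : rel V) (d : V -> V -> R) (S D : V)
  (Lt : nat -> option (seq V)) :
  2 < alpha -> 0 < lambda_e -> 0 < eps < 1 ->
  S != D ->
  (forall x y, e x y -> 0 < d x y) ->
  (* specification of tilde L_v for 1 <= v <= N_L - 1 *)
  (forall v : nat, (1 <= v <= #|V| - 1)%N ->
     match Lt v with
     | Some s =>
         [/\ is_SD_path e S D s, (hops s <= v)%N,
             sqlen d s < thrT alpha lambda_e eps &
             forall s', is_SD_path e S D s' -> (hops s' <= v)%N ->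
               sqlen d s <= sqlen d s']
     | None =>
         forall s', is_SD_path e S D s' -> (hops s' <= v)%N ->
           thrT alpha lambda_e eps <= sqlen d s'
     end) ->
  let feasible := [set s | is_SD_path e S D s /\
                           sqlen d s < thrT alpha lambda_e eps] in
  let best := (\big[Order.max/-oo]_(1 <= v < #|V|)
                 Mt d alpha lambda_e eps (Lt v))%E in
  ereal_sup [set Mt d alpha lambda_e eps (Some s) | s in feasible] = best /\
  (forall v s, (1 <= v <= #|V| - 1)%N -> Lt v = Some s ->
     Mt d alpha lambda_e eps (Lt v) = best ->
     s \in feasible /\
     forall s', s' \in feasible ->
       (Mt d alpha lambda_e eps (Some s') <= Mt d alpha lambda_e eps (Some s))%E).
Proof.
move=> a2 l0 /andP[e0 e1] SD dpos spec feasible best.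
set sup := ereal_sup _.
have c0 : 0 < ln ((1 - eps)^-1) by apply: ln_gt0; rewrite invf_gt1; lra.
have A : forall s, feasible s -> exists v t, [/\ (1 <= v <= #|V| - 1)%N,
    Lt v = Some t &
    (Mt d alpha lambda_e eps (Some s) <= Mt d alpha lambda_e eps (Some t))%E].
  move=> s [ps st].
  have sp := sd_sqlen_pos dpos SD ps.
  have [K0|K0] := ltrP 0 (K1 alpha lambda_e); last first.
    exfalso; move: st; rewrite /thrT.
    have : ln ((1 - eps)^-1) / K1 alpha lambda_e <= 0.
      by rewrite pmulr_rle0 // invr_le0.
    lra.
  have hs := sd_hops SD ps.
  exists (hops s); move: (spec _ hs); case: (Lt (hops s)) => [t|]; last first.
    by move=> /(_ s ps (leqnn _)); lra.
  case=> pt ht tt mint; exists t; split => //.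
  rewrite /Mt lee_fin; apply: key => //; try lra.
  - exact: sd_sqlen_pos dpos SD pt.
  - exact: mint.
  - by case/andP: (sd_hops SD pt).
have B : forall v, (1 <= v <= #|V| - 1)%N -> (Mt d alpha lambda_e eps (Lt v) <= sup)%E.
  move=> v hv; move: (spec v hv); case: (Lt v) => [t [pt _ tt _]|_].
    by apply: ereal_sup_ubound; exists t.
  exact: leNye.
have eq : sup = best.
  apply: le_anti; apply/andP; split.
    apply: ge_ereal_sup => _ [s fs <-].
    have [v [t [hv ht le]]] := A s fs.
    apply: le_trans le _; rewrite -ht; apply: (@bigmax_ge R (fun v => Mt d alpha lambda_e eps (Lt v))).
    lia.
  rewrite /best big_seq; apply: (big_ind (fun x => x <= sup)%E).
  - exact: leNye.
  - by move=> x y hx hy; rewrite ge_max hx hy.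
  move=> i; rewrite mem_index_iota => hi; apply: B.
  move: hi; case: #|V| => //= n; lia.
split=> // v s hv hs hb.
have : feasible s by move: (spec v hv); rewrite hs; case.
move=> fs; split; first exact: mem_set.
move=> s' /set_mem fs'; rewrite -hs hb -eq.
by apply: ereal_sup_ubound; exists s'.
Qed.
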